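(* An auction mechanism $(\pi,x)$ with display prices is incentive compatible if and only if for every advertiser $i$, every display price profile $\mathbf{p}$ and every cost-report profile $\mathbf{c}'_{-i}$ of the others: (1) $c_i\mapsto\pi_i(c_i,\mathbf{c}'_{-i},\mathbf{p})$ is non-increasing on $[\underline{c}_i,\overline{c}_i]$; and (2) there is a quantity $U_i(\mathbf{c}'_{-i},\mathbf{p})$ not depending on $i$'s cost report such that for all $c_i\in[\underline{c}_i,\overline{c}_i]$, $$x_i(c_i,\mathbf{c}'_{-i},\mathbf{p})=v_i(c_i,p_i)\pi_i(c_i,\mathbf{c}'_{-i},\mathbf{p})-\lambda_i(p_i)\int_{c_i}^{\overline{c}_i}\pi_i(z,\mathbf{c}'_{-i},\mathbf{p})\,dz-U_i(\mathbf{c}'_{-i},\mathbf{p}).$$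
   Context: There are advertisers $N=\{1,\dots,n\}$ competing for a single ad slot. Advertiser $i$ has a private product cost $c_i\in[\underline{c}_i,\overline{c}_i]$ and sets a display price $p_i$. Her conversion-rate function is $\lambda_i:\mathbb{R}\to(0,1]$, and her value when displayed at price $p_i$ is $v_i(c_i,p_i)=(p_i-c_i)\lambda_i(p_i)$. Each advertiser reports a cost $c_i'\in[\underline{c}_i,\overline{c}_i]$ and a display price $p_i$; write $\mathbf{c}'=(c_i',\mathbf{c}'_{-i})$, $\mathbf{p}=(p_i,\mathbf{p}_{-i})$. An auction mechanism $(\pi,x)$ consists of allocation functions $\pi_i(\mathbf{c}',\mathbf{p})\in\{0,1\}$ (at most one advertiser wins the slot) and payment functions $x_i(\mathbf{c}',\mathbf{p})\in\mathbb{R}$. The utility of advertiser $i$ with true cost $c_i$ is $u_i(c_i,\mathbf{c}',\mathbf{p})=v_i(c_i,p_i)\pi_i(\mathbf{c}',\mathbf{p})-x_i(\mathbf{c}',\mathbf{p})$. The mechanism is incentive compatible (IC) if for all $i$, all $c_i$, all $\mathbf{p}$ and all $\mathbf{c}'$: $u_i(c_i,(c_i,\mathbf{c}'_{-i}),\mathbf{p})\ge u_i(c_i,(c_i',\mathbf{c}'_{-i}),\mathbf{p})$. *)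

(* Defs.v *)
From Stdlib Require Import Reals.
From Coquelicot Require Import Coquelicot.
From mathcomp Require Import ssreflect ssrbool eqtype ssrnat fintype.
Open Scope R_scope.

Definition upd {n : nat} (c : 'I_n -> R) (i : 'I_n) (z : R) : 'I_n -> R :=
  fun j => if j == i then z else c j.

Definition admissible {n : nat} (lo hi : 'I_n -> R) (c : 'I_n -> R) : Prop :=
  forall j, lo j <= c j <= hi j.

Definition value {n : nat} (lam : 'I_n -> R -> R) (i : 'I_n) (ci pi : R) : R :=
  (pi - ci) * lam i pi.

Definition utility {n : nat} (lam : 'I_n -> R -> R)
  (alloc pay : 'I_n -> ('I_n -> R) -> ('I_n -> R) -> R)
  (i : 'I_n) (ci : R) (c' p : 'I_n -> R) : R :=
  value lam i ci (p i) * alloc i c' p - pay i c' p.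

Definition mechanism {n : nat} (lo hi : 'I_n -> R)
  (alloc : 'I_n -> ('I_n -> R) -> ('I_n -> R) -> R) : Prop :=
  forall c p, admissible lo hi c ->
    (forall i, alloc i c p = 0 \/ alloc i c p = 1) /\
    (forall i j, i <> j -> alloc i c p = 1 -> alloc j c p = 0).

Definition IC {n : nat} (lo hi : 'I_n -> R) (lam : 'I_n -> R -> R)
  (alloc pay : 'I_n -> ('I_n -> R) -> ('I_n -> R) -> R) : Prop :=
  forall (i : 'I_n) (ci : R) (p c' : 'I_n -> R),
    lo i <= ci <= hi i -> admissible lo hi c' ->
    utility lam alloc pay i ci (upd c' i ci) p >= utility lam alloc pay i ci c' p.

(* Main.v *)
Require Import Defs.
From Stdlib Require Import Reals Lra Psatz.
From Coquelicot Require Import Coquelicot.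
Open Scope R_scope.

Lemma flat (a b K : R) (h f : R -> R) : 0 <= K ->
 (forall x y, a<=x -> x<=y -> y<=b -> f y <= f x) ->
 (forall x y, a<=x -> x<=y -> y<=b -> Rabs (h x - h y) <= K*(y-x)*(f x - f y)) ->
 forall x y, a<=x -> x<=y -> y<=b -> h x = h y.
Proof.
intros HK Hm Hb.
assert (Hind: forall d, 0<d -> forall N:nat, forall x y, a<=x -> x<=y -> y<=b ->
   y - x <= INR N * d -> Rabs (h x - h y) <= K*d*(f x - f y)).
{ intros d Hd N; induction N as [|N IH]; intros x y Hx Hxy Hy Hl.
  - simpl in Hl. replace y with x by lra.
    replace (h x - h x) with 0 by ring. replace (K*d*(f x - f x)) with 0 by ring.
    rewrite Rabs_R0; lra.
  - destruct (Rle_lt_dec (y - x) d).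
    + eapply Rle_trans; [apply Hb; auto|].
      pose proof (Hm x y Hx Hxy Hy).
      assert (0 <= K*(f x - f y)) by (apply Rmult_le_pos; lra). nra.
    + rewrite S_INR in Hl.
      assert (H1 := IH (x+d) y ltac:(lra) ltac:(lra) Hy ltac:(lra)).
      assert (H2 := Hb x (x+d) Hx ltac:(lra) ltac:(lra)).
      replace (x + d - x) with d in H2 by ring.
      replace (h x - h y) with ((h x - h (x+d)) + (h (x+d) - h y)) by ring.
      eapply Rle_trans; [apply Rabs_triang|]. nra. }
intros x y Hx Hxy Hy.
destruct (Req_dec (h x) (h y)) as [E|E]; [exact E|exfalso].
assert (He : 0 < Rabs (h x - h y)) by (apply Rabs_pos_lt; lra).
set (e := Rabs (h x - h y)) in *.
pose proof (Hm x y Hx Hxy Hy).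
set (M := K*(f x - f y)).
assert (HM : 0 <= M) by (apply Rmult_le_pos; lra).
set (d := e/(2*(M+1))).
assert (Hd : d*(2*(M+1)) = e) by (unfold d; field; lra).
assert (Hd0 : 0 < d) by (unfold d; apply Rdiv_lt_0_compat; lra).
destruct (INR_unbounded ((y-x)/d)) as [N HN].
assert (HN' : y - x <= INR N * d).
{ apply Rlt_le. apply (Rmult_lt_compat_r d) in HN; [|lra].
  unfold Rdiv in HN. rewrite Rmult_assoc, Rinv_l in HN; lra. }
pose proof (Hind d Hd0 N x y Hx Hxy Hy HN').
fold e in H0. assert (K*d*(f x - f y) = M*d) by (unfold M; ring). nra.
Qed.

Lemma ex_step (a b : R) (f : R->R) : a<=b ->
  (forall x, a<=x<=b -> f x = 0 \/ f x = 1) ->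
  (forall x y, a<=x -> x<=y -> y<=b -> f y <= f x) -> ex_RInt f a b.
Proof.
intros Hab H01 Hm.
destruct (Req_dec (f b) 1) as [Hb1|Hb1].
{ apply (ex_RInt_ext (fun _ => 1)); [|apply ex_RInt_const].
  rewrite Rmin_left; [|lra]; rewrite Rmax_right; [|lra].
  intros x Hx. pose proof (Hm x b ltac:(lra) ltac:(lra) ltac:(lra)).
  destruct (H01 x ltac:(lra)); lra. }
assert (Hb0 : f b = 0) by (destruct (H01 b ltac:(lra)); lra).
destruct (Req_dec (f a) 0) as [Ha0|Ha0].
{ apply (ex_RInt_ext (fun _ => 0)); [|apply ex_RInt_const].
  rewrite Rmin_left; [|lra]; rewrite Rmax_right; [|lra].
  intros x Hx. pose proof (Hm a x ltac:(lra) ltac:(lra) ltac:(lra)).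
  destruct (H01 x ltac:(lra)); lra. }
assert (Ha1 : f a = 1) by (destruct (H01 a ltac:(lra)); lra).
set (E := fun x => a <= x <= b /\ f x = 1).
destruct (completeness E) as [t [Hub Hlub]].
{ exists b. intros x [Hx _]. lra. }
{ exists a. split; [lra|exact Ha1]. }
assert (Hat : a <= t) by (apply Hub; split; [lra|exact Ha1]).
assert (Htb : t <= b) by (apply Hlub; intros x [Hx _]; lra).
apply (ex_RInt_Chasles _ _ t).
- apply (ex_RInt_ext (fun _ => 1)); [|apply ex_RInt_const].
  rewrite Rmin_left; [|lra]; rewrite Rmax_right; [|lra].
  intros x Hx. destruct (H01 x ltac:(lra)) as [Hx0|Hx1]; [|symmetry; exact Hx1].
  exfalso.
  assert (t <= x); [|lra].
  apply Hlub. intros y [Hy Hy1].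
  destruct (Rle_lt_dec y x) as [|Hlt]; [assumption|].
  pose proof (Hm x y ltac:(lra) ltac:(lra) ltac:(lra)). lra.
- apply (ex_RInt_ext (fun _ => 0)); [|apply ex_RInt_const].
  rewrite Rmin_left; [|lra]; rewrite Rmax_right; [|lra].
  intros x Hx. destruct (H01 x ltac:(lra)) as [Hx0|Hx1]; [symmetry; exact Hx0|].
  exfalso. assert (x <= t); [|lra]. apply Hub. split; [lra|exact Hx1].
Qed.

Section S.
Variables (a b : R) (f : R -> R).
Hypothesis H01 : forall x, a<=x<=b -> f x = 0 \/ f x = 1.
Hypothesis Hm : forall x y, a<=x -> x<=y -> y<=b -> f y <= f x.

Lemma exA x y : a <= x <= b -> a <= y <= b -> ex_RInt f x y.
Proof.
intros Hx Hy. destruct (Rle_lt_dec x y).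
- apply ex_step; [lra| intros; apply H01; lra | intros; apply Hm; lra].
- apply ex_RInt_swap. apply ex_step; [lra| intros; apply H01; lra | intros; apply Hm; lra].
Qed.

Lemma RInt_cst (x y c : R) : RInt (fun _ => c) x y = (y - x) * c.
Proof. rewrite RInt_const. reflexivity. Qed.

Lemma lowB x y : a <= x <= b -> a <= y <= b -> (y - x) * f y <= RInt f x y.
Proof.
intros Hx Hy. destruct (Rle_lt_dec x y).
- rewrite <- RInt_cst. apply RInt_le; [lra| apply ex_RInt_const | apply exA; lra |].
  intros z Hz. apply Hm; lra.
- rewrite <- (opp_RInt_swap f y x) by (apply exA; lra).
  assert (RInt f y x <= RInt (fun _ => f y) y x).
  { apply RInt_le; [lra| apply exA; lra | apply ex_RInt_const |].
    intros z Hz. apply Hm; lra. }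
  rewrite RInt_cst in H. unfold opp; simpl. lra.
Qed.

Lemma upB x y : a <= x -> x <= y -> y <= b -> RInt f x y <= (y - x) * f x.
Proof.
intros. rewrite <- RInt_cst. apply RInt_le; [lra| apply exA; lra | apply ex_RInt_const |].
intros z Hz. apply Hm; lra.
Qed.

Lemma chas x y : a <= x <= b -> a <= y <= b -> RInt f x b = RInt f x y + RInt f y b.
Proof.
intros. rewrite <- (RInt_Chasles f x y b) by (apply exA; lra). reflexivity.
Qed.
End S.

From Stdlib Require Import FunctionalExtensionality.
From mathcomp Require Import ssreflect ssrbool eqtype ssrnat fintype.

Lemma upd_upd {n : nat} (c : 'I_n -> R) i z w : upd (upd c i z) i w = upd c i w.
Proof. apply functional_extensionality => j; rewrite /upd; by case: (j == i). Qed.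

Lemma upd_id {n : nat} (c : 'I_n -> R) i : upd c i (c i) = c.
Proof. apply functional_extensionality => j; rewrite /upd; by case: eqP => [->|]. Qed.

Lemma adm_upd {n : nat} {lo hi c : 'I_n -> R} {i z} :
  admissible lo hi c -> lo i <= z <= hi i -> admissible lo hi (upd c i z).
Proof. move=> Hc Hz j; rewrite /upd; by case: eqP => [->|_]. Qed.

Theorem theorem1 (n : nat) (lo hi : 'I_n -> R) (lam : 'I_n -> R -> R)
  (alloc pay : 'I_n -> ('I_n -> R) -> ('I_n -> R) -> R)
  (Hlohi : forall i, lo i <= hi i)
  (Hlam : forall i (q : R), 0 < lam i q <= 1)
  (Hmech : mechanism lo hi alloc) :
  IC lo hi lam alloc pay <->
  (forall (i : 'I_n) (p c' : 'I_n -> R), admissible lo hi c' ->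
     (forall z1 z2, lo i <= z1 -> z1 <= z2 -> z2 <= hi i ->
        alloc i (upd c' i z2) p <= alloc i (upd c' i z1) p) /\
     (exists U : R, forall z, lo i <= z <= hi i ->
        pay i (upd c' i z) p =
          value lam i z (p i) * alloc i (upd c' i z) p
          - lam i (p i) * RInt (fun t => alloc i (upd c' i t) p) z (hi i)
          - U)).
Proof.
have ICeq : IC lo hi lam alloc pay <-> forall i p c0, admissible lo hi c0 ->
  forall c z, lo i <= c <= hi i -> lo i <= z <= hi i ->
  utility lam alloc pay i c (upd c0 i c) p >= utility lam alloc pay i c (upd c0 i z) p.
{ split.
  - move=> H i p c0 Hc0 c z Hc Hz.
    have := H i c p (upd c0 i z) Hc (adm_upd Hc0 Hz). by rewrite upd_upd.
  - move=> H i ci p c' Hci Hc'.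
    have := H i p c' Hc' ci (c' i) Hci (Hc' i). by rewrite upd_id. }
rewrite ICeq; clear ICeq.
split.
- move=> H i p c0 Hc0.
  pose f := fun z => alloc i (upd c0 i z) p.
  pose g := fun z => pay i (upd c0 i z) p.
  pose L := lam i (p i). pose P := p i.
  pose u := fun z => (P - z) * L * f z - g z.
  have HL : 0 < L by case: (Hlam i (p i)).
  have H01 : forall z, lo i <= z <= hi i -> f z = 0 \/ f z = 1.
  { move=> z Hz. exact: (proj1 (Hmech _ p (adm_upd Hc0 Hz)) i). }
  have HIC : forall c z, lo i <= c <= hi i -> lo i <= z <= hi i ->
     u c >= u z + (z - c) * L * f z.
  { move=> c z Hc Hz. have := H i p c0 Hc0 c z Hc Hz.
    rewrite /utility /value /u /f /g -/P -/L. nra. }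
  have Hmono : forall z1 z2, lo i <= z1 -> z1 <= z2 -> z2 <= hi i -> f z2 <= f z1.
  { move=> z1 z2 H1 H12 H2.
    have A1 := HIC z1 z2 ltac:(lra) ltac:(lra).
    have A2 := HIC z2 z1 ltac:(lra) ltac:(lra).
    case: (Req_dec z1 z2) => [->|Hne]; first lra.
    case: (H01 z1 ltac:(lra)) => E1; case: (H01 z2 ltac:(lra)) => E2;
      rewrite E1 E2 in A1 A2 *; nra. }
  split; first exact Hmono.
  exists (u (hi i)).
  pose h := fun z => u z - L * RInt f z (hi i).
  have Hflat := flat (lo i) (hi i) L h f ltac:(lra) Hmono.
  have Hh : forall z, lo i <= z <= hi i -> h z = h (hi i).
  { move=> z Hz. apply: Hflat; try lra.
    move=> x y Hx Hxy Hy.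
    have C := chas (lo i) (hi i) f H01 Hmono x y ltac:(lra) ltac:(lra).
    have B1 := lowB (lo i) (hi i) f H01 Hmono x y ltac:(lra) ltac:(lra).
    have B2 := upB (lo i) (hi i) f H01 Hmono x y Hx Hxy Hy.
    have A1 := HIC x y ltac:(lra) ltac:(lra).
    have A2 := HIC y x ltac:(lra) ltac:(lra).
    rewrite /h C.
    have M1 := Rmult_le_compat_l L _ _ (Rlt_le _ _ HL) B1.
    have M2 := Rmult_le_compat_l L _ _ (Rlt_le _ _ HL) B2.
    apply: Rabs_le. split; nra. }
  move=> z Hz. have := Hh z Hz. rewrite /h RInt_point.
  rewrite /u /g /f /value -/P -/L /zero /=. move=> E. lra.
- move=> H i p c0 Hc0 c z Hc Hz.
  case: (H i p c0 Hc0) => Hmono [U HU].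
  rewrite /utility (HU c Hc) (HU z Hz) /value.
  pose f := fun t => alloc i (upd c0 i t) p.
  have H01 : forall z, lo i <= z <= hi i -> f z = 0 \/ f z = 1.
  { move=> w Hw. exact: (proj1 (Hmech _ p (adm_upd Hc0 Hw)) i). }
  have C := chas (lo i) (hi i) f H01 Hmono c z Hc Hz.
  have B := lowB (lo i) (hi i) f H01 Hmono c z Hc Hz.
  rewrite -/f C.
  have HL : 0 < lam i (p i) by case: (Hlam i (p i)).
  have M := Rmult_le_compat_l (lam i (p i)) _ _ (Rlt_le _ _ HL) B.
  rewrite /f in M *. nra.
Qed.
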